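(* Let $A$ be a finite-dimensional evolution algebra over a field $\mathbb{K}$ with natural basis $B$. \begin{enumerate} \item[(i)] If $I$ is an ideal of $A$ with $I=\mathbb{K}u$ and $|\mathrm{supp}_B(u)|>1$, then $A/I$ is not simple. \item[(ii)] If $A=A_1\otimes A_2$ where $A_1,A_2$ are evolution $\mathbb{K}$-algebras with $\dim A_1>1$ and $\dim A_2>1$ (so $A$ is tensorially decomposable), and $0\neq I$ is an ideal of $A$ with $I=\mathbb{K}u$, then $A/I$ is not simple. \end{enumerate}
   Context: An evolution algebra over $\mathbb{K}$ is a $\mathbb{K}$-algebra with a basis $B=\{e_1,\dots,e_n\}$ (natural basis) such that $e_ie_j=0$ for $i\neq j$. For $u=\sum_i\alpha_ie_i\in A$, $\mathrm{supp}_B(u)=\{i:\alpha_i\neq0\}$. The tensor product $A_1\otimes A_2$ of evolution algebras with natural bases $\{a_i\}$, $\{b_p\}$ is the evolution algebra with natural basis $\{a_i\otimes b_p\}$ and product $(a\otimes b)(a'\otimes b')=aa'\otimes bb'$. A $\mathbb{K}$-algebra is simple if its square is nonzero and its only ideals are $0$ and itself. *)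

(* Defs.v *)
From HB Require Import structures.
From mathcomp Require Import all_boot all_order all_algebra.
Set Implicit Arguments. Unset Strict Implicit. Unset Printing Implicit Defensive.
Import GRing.Theory.
Local Open Scope ring_scope.

Section EvoDefs.
Variable K : fieldType.

(* A finite-dimensional evolution algebra with natural basis {e_i | i : I}
   is modelled, via coordinates in that basis, by K^I = evo I = {ffun I -> K^o} with
   e_i = indicator of i and product determined by the structure constants
   C : e_i e_i = \sum_k C i k e_k, e_i e_j = 0 (i <> j). *)
Definition evo (I : finType) : lmodType K := {ffun I -> K^o}.

Definition evo_mul (I : finType) (C : I -> I -> K) (x y : evo I)
  : evo I := [ffun k => \sum_i x i * y i * C i k].

Definition evo_basis (I : finType) (i : I) : evo I :=
  [ffun j => (i == j)%:R].

Definition supp (I : finType) (u : evo I) : {set I} :=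
  [set i | u i != 0].

(* tensor product of evolution algebras: natural basis a_i (x) b_p indexed by
   I1 * I2, with (a_i (x) b_p)^2 = a_i^2 (x) b_p^2 *)
Definition tensor_C (I1 I2 : finType) (C1 : I1 -> I1 -> K) (C2 : I2 -> I2 -> K)
  : (I1 * I2)%type -> (I1 * I2)%type -> K :=
  fun ip jq => C1 ip.1 jq.1 * C2 ip.2 jq.2.

Definition bilinear_mul (V : lmodType K) (mul : V -> V -> V) : Prop :=
  forall (a : K) (x y z : V),
    mul (a *: x + y) z = a *: mul x z + mul y z /\
    mul z (a *: x + y) = a *: mul z x + mul z y.

Definition subspace (V : lmodType K) (P : V -> Prop) : Prop :=
  P 0 /\ forall (a : K) (x y : V), P x -> P y -> P (a *: x + y).

Definition alg_ideal (V : lmodType K) (mul : V -> V -> V) (P : V -> Prop) : Prop :=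
  subspace P /\ forall x y : V, P y -> P (mul x y) /\ P (mul y x).

Definition simple_alg (V : lmodType K) (mul : V -> V -> V) : Prop :=
  (exists x y : V, mul x y <> 0) /\
  forall P : V -> Prop, alg_ideal mul P ->
    (forall x, P x <-> x = 0) \/ (forall x, P x).

Definition line (V : lmodType K) (u : V) : V -> Prop :=
  fun x => exists k : K, x = k *: u.

(* (V, mulV) together with f is (a copy of) the quotient algebra A / P:
   f is a surjective algebra homomorphism with kernel exactly P *)
Definition is_quotient_alg (A : lmodType K) (mulA : A -> A -> A) (P : A -> Prop)
  (V : lmodType K) (mulV : V -> V -> V) (f : A -> V) : Prop :=
  bilinear_mul mulV /\ linear f /\
  (forall x y, f (mulA x y) = mulV (f x) (f y)) /\
  (forall v : V, exists x : A, f x = v) /\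
  (forall x : A, f x = 0 <-> P x).

Definition quotient_simple (A : lmodType K) (mulA : A -> A -> A) (P : A -> Prop)
  : Prop :=
  exists (V : lmodType K) (mulV : V -> V -> V) (f : A -> V),
    is_quotient_alg mulA P mulV f /\ simple_alg mulV.

End EvoDefs.

(* Main.v *)
Require Import Defs.
From HB Require Import structures.
From mathcomp Require Import all_boot all_order all_algebra.
From mathcomp Require Import ring.
Import GRing.Theory.
Local Open Scope ring_scope.

Section Aux.
Variable K : fieldType.

Lemma lin_facts (A V : lmodType K) (f : A -> V) : linear f ->
  f 0 = 0 /\ (forall k x, f (k *: x) = k *: f x).
Proof.
move=> lin.
have f0 : f 0 = 0.
  have := lin (-1) 0 0; rewrite scaler0 addr0 scaleN1r addNr; by [].
split=> // k x; have := lin k x 0; by rewrite addr0 f0 addr0.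
Qed.

Lemma L1 (A : lmodType K) (mulA : A -> A -> A) (P : A -> Prop) (w : A) :
  (forall x k, P (mulA x (k *: w)) /\ P (mulA (k *: w) x)) -> ~ P w ->
  ~ quotient_simple mulA P.
Proof.
move=> Hp nPw [V [mulV [f [[bil [lin [hom [surj ker]]]] [[x [y nz]] simp]]]]].
have [f0 fZ] := @lin_facts _ _ f lin.
have Qid : alg_ideal mulV (line (f w)).
  split.
    split; first by exists 0; rewrite scale0r.
    move=> a _ _ [k1 ->] [k2 ->]; exists (a * k1 + k2).
    by rewrite scalerDl scalerA.
  move=> v _ [k ->]; have [x' <-] := surj v.
  rewrite -fZ -!hom; split; exists 0; rewrite scale0r; apply/ker; apply Hp.
case: (simp _ Qid) => [H0|Hall].
  apply: nPw; apply/ker; apply/(H0 (f w)); exists 1; by rewrite scale1r.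
have [x' ex] := surj x; have [k ey] := Hall y.
apply: nz; rewrite -ex ey -fZ -hom; apply/ker; apply Hp.
Qed.

Lemma L0 (A : lmodType K) (mulA : A -> A -> A) (P J : A -> Prop) (y z : A) :
  alg_ideal mulA J -> (forall x, P x -> J x) -> J y -> ~ P y -> ~ J z ->
  ~ quotient_simple mulA P.
Proof.
move=> [[J0 JD] JM] PJ Jy nPy nJz
  [V [mulV [f [[bil [lin [hom [surj ker]]]] [[x [y' nz]] simp]]]]].
have [f0 fZ] := @lin_facts _ _ f lin.
have Qid : alg_ideal mulV (fun v => exists y, J y /\ f y = v).
  split.
    split; first by exists 0.
    move=> a _ _ [y1 [J1 <-]] [y2 [J2 <-]]; exists (a *: y1 + y2).
    by split; [apply: JD | rewrite lin].
  move=> v _ [y1 [J1 <-]]; have [x' <-] := surj v.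
  rewrite -!hom; split; [exists (mulA x' y1) | exists (mulA y1 x')];
    split=> //; [exact: (JM _ _ J1).1 | exact: (JM _ _ J1).2].
case: (simp _ Qid) => [H0|Hall].
  apply: nPy; apply/ker; apply/(H0 (f y)); by exists y.
have [y1 [J1 e]] := Hall (f z).
have Pd : P ((-1) *: y1 + z).
  by apply/ker; rewrite lin e scaleN1r addNr.
apply: nJz; have := JD 1 _ _ (PJ _ Pd) J1.
by rewrite scale1r scaleN1r addrC addrA addrN add0r.
Qed.

Section Evo.
Variable I : finType.
Variable C : I -> I -> K.

Lemma evo_mulC (x y : evo K I) : evo_mul C x y = evo_mul C y x.
Proof. apply/ffunP=> l; rewrite !ffunE; apply: eq_bigr => i _; by rewrite (mulrC (x i)). Qed.

Lemma evo_mulZr (x y : evo K I) k : evo_mul C x (k *: y) = k *: evo_mul C x y.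
Proof.
apply/ffunP=> l; rewrite !ffunE /= scaler_sumr; apply: eq_bigr => i _.
rewrite ffunE; change (x i * (k * y i) * C i l = k * (x i * y i * C i l)); ring.
Qed.

Lemma evo_mul_basis (x : evo K I) j :
  evo_mul C x (evo_basis K j) = [ffun l => x j * C j l].
Proof.
apply/ffunP=> l; rewrite !ffunE (bigD1 j) //= big1 ?addr0.
  by rewrite ffunE eqxx mulr1.
by move=> i ne; rewrite ffunE eq_sym (negbTE ne) mulr0 mul0r.
Qed.


Lemma part1 (u : evo K I) : alg_ideal (evo_mul C) (line u) ->
  (1 < #|supp u|)%N -> ~ quotient_simple (evo_mul C) (line u).
Proof.
move=> [_ Hid] /card_gt1P [j [i [ju iu ne]]].
rewrite /supp !inE in ju iu.
have [c ec] := (Hid (evo_basis K j) u (ex_intro _ 1 (esym (scale1r u)))).2.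
rewrite evo_mul_basis in ec.
have e l : u j * C j l = c * u l.
  by have := congr1 (fun g : evo K I => g l) ec; rewrite !ffunE.
have cj : c = C j j.
  by have := e j; rewrite mulrC => /(mulIf ju).
apply: (@L1 _ _ _ (evo_basis K j)).
  move=> x k.
  have h : line u (evo_mul C x (k *: evo_basis K j)).
    rewrite evo_mulZr evo_mul_basis; exists (k * (x j * C j j / u j)).
    apply/ffunP => l; rewrite !ffunE.
    change (k * (x j * C j l) = k * (x j * C j j / u j) * u l).
    have := e l; rewrite cj => el.
    rewrite -[C j l](mulKf ju) el; field; exact: ju.
  by split => //; rewrite evo_mulC.
move=> [c' ec'].
have := congr1 (fun g : evo K I => g i) ec'; have := congr1 (fun g : evo K I => g j) ec'.
rewrite !ffunE eqxx (negbTE ne) => e1 e2.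
have e2' : c' * u i = 0 := esym e2.
have e1' : 1 = c' * u j := e1.
move/eqP: e2'; rewrite mulf_eq0 (negbTE iu) orbF => /eqP c0.
by move: e1'; rewrite c0 mul0r => /eqP; rewrite oner_eq0.
Qed.

Lemma L0evo (u : evo K I) (S : pred I) a b :
  (forall l m, S l -> ~~ S m -> C l m = 0) -> (forall l, ~~ S l -> u l = 0) ->
  S a -> u a = 0 -> ~~ S b -> ~ quotient_simple (evo_mul C) (line u).
Proof.
move=> HC Hu Sa ua Sb.
apply: (@L0 _ _ _ (fun x : evo K I => forall l, ~~ S l -> x l = 0)
   (evo_basis K a) (evo_basis K b)).
- split; first split.
  + by move=> l _; rewrite ffunE.
  + by move=> k x y Jx Jy l Sl; rewrite !ffunE Jx // Jy // scaler0 addr0.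
  move=> x y Jy.
  have h : forall l, ~~ S l -> evo_mul C x y l = 0.
    move=> l Sl; rewrite ffunE big1 // => m _.
    case: (boolP (S m)) => Sm; first by rewrite HC // mulr0.
    by rewrite Jy // mulr0 mul0r.
  by split => //; rewrite evo_mulC.
- by move=> x [c ->] l Sl; rewrite ffunE Hu // scaler0.
- move=> l Sl; rewrite ffunE.
  have al : a != l by apply: contraNneq Sl => <-.
  by rewrite (negbTE al).
- move=> [c' ec']; have := congr1 (fun g : evo K I => g a) ec'.
  rewrite !ffunE eqxx ua scaler0 => /eqP; by rewrite oner_eq0.
- move=> Jb; have := Jb b Sb; rewrite ffunE eqxx => /eqP; by rewrite oner_eq0.
Qed.

End Evo.
End Aux.

Lemma other_ord (n : nat) (p : 'I_n) : (1 < n)%N -> exists q : 'I_n, q != p.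
Proof.
move=> h1; have h0 : (0 < n)%N by apply: ltn_trans h1.
case: (eqVneq p (Ordinal h0)) => [-> | ne].
  by exists (Ordinal h1); apply/eqP => -[].
by exists (Ordinal h0); rewrite eq_sym.
Qed.

Theorem theorem4p7 (K : fieldType) :
  (* (i) *)
  (forall (n : nat) (C : 'I_n -> 'I_n -> K) (u : evo K 'I_n),
      alg_ideal (evo_mul C) (line u) ->
      (1 < #|supp u|)%N ->
      ~ quotient_simple (evo_mul C) (line u)) /\
  (* (ii) *)
  (forall (n1 n2 : nat) (C1 : 'I_n1 -> 'I_n1 -> K) (C2 : 'I_n2 -> 'I_n2 -> K)
          (u : evo K ('I_n1 * 'I_n2)%type),
      (1 < n1)%N -> (1 < n2)%N ->
      u <> 0 ->
      alg_ideal (evo_mul (tensor_C C1 C2)) (line u) ->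
      ~ quotient_simple (evo_mul (tensor_C C1 C2)) (line u)).
Proof.
split; first by move=> n C u; exact: part1.
move=> n1 n2 C1 C2 u h1 h2 u0 Hid.
case: (ltnP 1 #|supp u|) => [gt|le]; first exact: part1.
have [l ul] : exists l, u l != 0.
  case: (pickP (fun l => u l != 0)) => [l ul | h]; first by exists l.
  exfalso; apply: u0; apply/ffunP => l; rewrite ffunE.
  by move/negbFE/eqP: (h l).
have /cards1P [[i p] sE] : #|supp u| == 1%N.
  rewrite eqn_leq le card_gt0; apply/set0Pn; exists l; by rewrite inE.
have huz : forall l, l != (i, p) -> u l = 0.
  move=> l' nl; apply/eqP; apply: contraNT nl => nz.
  have : l' \in supp u by rewrite inE.
  by rewrite sE inE.
have uip : u (i, p) != 0.
  have : (i, p) \in supp u by rewrite sE set11.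
  by rewrite inE.
have H : forall k r, (k, r) != (i, p) -> C1 i k * C2 p r = 0.
  have [c ec] := (Hid.2 (evo_basis K (i, p)) u (ex_intro _ 1 (esym (scale1r u)))).2.
  rewrite evo_mul_basis in ec.
  move=> k r ne; have := congr1 (fun g : evo K _ => g (k, r)) ec.
  rewrite !ffunE (huz _ ne) => e.
  have e' : u (i, p) * (C1 i k * C2 p r) = c * 0 := e.
  rewrite mulr0 in e'.
  by move/eqP: e'; rewrite mulf_eq0 (negbTE uip) /= => /eqP.
have [j ji] := @other_ord _ i h1.
have [q qp] := @other_ord _ p h2.
case: (boolP [forall k, (k != i) ==> (C1 i k == 0)]) => [/forallP ha | /forallPn [k]].
  apply: (@L0evo _ _ _ u (fun l => l.1 == i) (i, q) (j, p)).
  - move=> [l1 l2] [m1 m2] /= /eqP -> mi; rewrite /tensor_C /=.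
    by have := ha m1; rewrite mi /= => /eqP ->; rewrite mul0r.
  - by move=> l' li; apply: huz; apply: contraNneq li => ->.
  - by rewrite /= eqxx.
  - by apply: huz; apply: contraNneq qp => -[->].
  - by rewrite /= ji.
rewrite negb_imply => /andP [ki Cik].
have hb : forall r, r != p -> C2 p r = 0.
  move=> r rp; have ne : (k, r) != (i, p) by apply: contraNneq ki => -[-> _].
  by have /eqP := H k r ne; rewrite mulf_eq0 (negbTE Cik) /= => /eqP.
apply: (@L0evo _ _ _ u (fun l => l.2 == p) (j, p) (i, q)).
- move=> [l1 l2] [m1 m2] /= /eqP -> mp; rewrite /tensor_C /=.
  by rewrite hb // mulr0.
- by move=> l' li; apply: huz; apply: contraNneq li => ->.
- by rewrite /= eqxx.
- by apply: huz; apply: contraNneq ji => -[->].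
- by rewrite /= qp.
Qed.
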